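(* Let $S\subseteq\mathbb{N}^d$ be a Frobenius GNS with Frobenius gap $F(S)$. Then $$\frac{g(S)}{\|F(S)\|-g(S)}\le t(S).$$
   Context: $\mathbb{N}=\{0,1,2,\dots\}$. A GNS is a submonoid $S\subseteq\mathbb{N}^d$ with finite complement $\mathcal{H}(S)=\mathbb{N}^d\setminus S$ (gaps); $g(S)=|\mathcal{H}(S)|$. A Frobenius GNS is a GNS such that $\mathcal{H}(S)$ has a unique maximal element $F(S)$ for the natural partial order ($x\le y$ iff $x^{(i)}\le y^{(i)}$ for all $i$). A gap $P$ is pseudo-Frobenius if $P+s\in S$ for all nonzero $s\in S$; $t(S)$ is the number of pseudo-Frobenius gaps. For $F\in\mathbb{N}^d$, $\|F\|=\prod_{i=1}^d(F^{(i)}+1)$. *)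

(* Defs.v *)
From mathcomp Require Import all_boot all_order all_algebra.
From mathcomp Require Import finmap.
From mathcomp Require Import boolp.
Set Implicit Arguments. Unset Strict Implicit. Unset Printing Implicit Defensive.
Local Open Scope fset_scope.

Definition vec (d : nat) := {ffun 'I_d -> nat}.

Definition vzero d : vec d := [ffun _ => 0%N].
Definition vadd d (x y : vec d) : vec d := [ffun i => (x i + y i)%N].

Definition vle d (x y : vec d) : bool := [forall i, (x i <= y i)%N].
Definition vlt d (x y : vec d) : bool := (x != y) && vle x y.

Definition submonoid d (S : pred (vec d)) : Prop :=
  S (vzero d) /\ forall x y, S x -> S y -> S (vadd x y).

Definition GNS_with_gaps d (S : pred (vec d)) (H : {fset vec d}) : Prop :=
  submonoid S /\ forall x, ~~ S x <-> x \in H.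

Definition genus d (H : {fset vec d}) : nat := #|` H|.

Definition maximal_in d (H : {fset vec d}) (x : vec d) : Prop :=
  x \in H /\ forall h, h \in H -> ~~ vlt x h.
Definition unique_maximal d (H : {fset vec d}) (F : vec d) : Prop :=
  maximal_in H F /\ forall x, maximal_in H x -> x = F.

Definition vnorm d (F : vec d) : nat := \prod_(i < d) (F i).+1.

Definition pseudo_frobenius d (S : pred (vec d)) (H : {fset vec d}) (P : vec d) : Prop :=
  P \in H /\ forall s, S s -> s != vzero d -> S (vadd P s).

Definition type_of d (S : pred (vec d)) (H : {fset vec d}) : nat :=
  #|` [fset P in H | `[< pseudo_frobenius S H P >]]|.

(* Main.v *)
Require Import Defs.
From mathcomp Require Import all_boot all_order all_algebra.
From mathcomp Require Import finmap.
From mathcomp Require Import boolp.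
From Stdlib Require Import Classical.
Import Order.TTheory GRing.Theory Num.Theory.
Set Implicit Arguments. Unset Strict Implicit. Unset Printing Implicit Defensive.

Section Gns.
Local Open Scope fset_scope.
Variables (d : nat) (S : pred (vec d)) (H : {fset vec d}) (F : vec d).

Lemma vle_refl (x : vec d) : vle x x. Proof. by apply/forallP. Qed.
Lemma vle_trans (x y z : vec d) : vle x y -> vle y z -> vle x z.
Proof. move=> /forallP h1 /forallP h2; apply/forallP => i; exact: leq_trans (h1 i) (h2 i). Qed.
Lemma vle_anti (x y : vec d) : vle x y -> vle y x -> x = y.
Proof. move=> /forallP h1 /forallP h2; apply/ffunP => i; apply/eqP; by rewrite eqn_leq h1 h2. Qed.
Lemma vlt_trans (x y z : vec d) : vlt x y -> vlt y z -> vlt x z.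
Proof.
rewrite /vlt => /andP[nxy lxy] /andP[nyz lyz]; rewrite (vle_trans lxy lyz) andbT.
apply/eqP => exz; subst z; by rewrite (vle_anti lxy lyz) eqxx in nxy.
Qed.
Lemma vlt_irr (x : vec d) : ~~ vlt x x. Proof. by rewrite /vlt eqxx. Qed.

Lemma H_ind (P : vec d -> Prop) :
  (forall x, x \in H -> (forall y, y \in H -> vlt x y -> P y) -> P x) ->
  forall x, x \in H -> P x.
Proof.
move=> IH.
pose m x := #|` [fset y in H | vlt x y]|.
have key : forall a b, b \in H -> vlt a b -> (m b < m a)%N.
  move=> a b bH lab; apply: fproper_ltn_card; rewrite fproperE; apply/andP; split.
    apply/fsubsetP => z; rewrite !inE /= => /andP[zH lbz]; rewrite zH (vlt_trans lab lbz) //.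
  by apply/fsubsetPn; exists b; rewrite !inE /= ?bH ?lab ?vlt_irr //.
suff: forall n x, (m x <= n)%N -> x \in H -> P x by move=> h x; apply: (h _ x (leqnn _)).
elim=> [|n IHn] a ha aH; apply: IH => // y yH lay.
  by have := leq_trans (key _ _ yH lay) ha.
apply: (IHn _ _ yH); rewrite -ltnS; exact: leq_trans (key _ _ yH lay) ha.
Qed.


Lemma gaps_le_F : unique_maximal H F -> forall x, x \in H -> vle x F.
Proof.
move=> hG; apply: H_ind => x xH IH.
case: (classic (exists y, y \in H /\ vlt x y)) => [[y [yH lxy]]|nex].
  by apply: vle_trans (IH y yH lxy); case/andP: lxy.
have mx : maximal_in H x.
  by split => // h hH; apply/negP => l; apply: nex; exists h.
by rewrite (hG.2 x mx) vle_refl.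
Qed.

Definition PFs := [fset P in H | `[< pseudo_frobenius S H P >]].

Lemma vadd0 (x : vec d) : vadd x (vzero d) = x.
Proof. by apply/ffunP => i; rewrite !ffunE addn0. Qed.
Lemma vaddA (x y z : vec d) : vadd (vadd x y) z = vadd x (vadd y z).
Proof. by apply/ffunP => i; rewrite !ffunE addnA. Qed.

Lemma pf_decomp : GNS_with_gaps S H ->
  forall x, x \in H -> exists s, S s /\ vadd x s \in PFs.
Proof.
move=> hS; apply: H_ind => x xH IH.
case: (classic (pseudo_frobenius S H x)) => [pf|npf].
  exists (vzero d); split; first exact: hS.1.1.
  by rewrite vadd0 !inE /= xH; apply/asboolP.
have [s [Ss [sn0 nS]]] : exists s, S s /\ s != vzero d /\ ~~ S (vadd x s).
  apply: NNPP => hn; apply: npf; split => // s Ss sn0.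
  by apply/negPn/negP => hns; apply: hn; exists s.
have yH : vadd x s \in H by apply/(hS.2 _).
have lt : vlt x (vadd x s).
  rewrite /vlt; apply/andP; split; last by apply/forallP => i; rewrite ffunE leq_addr.
  apply/eqP => e; move/eqP: sn0; apply; apply/ffunP => i.
  have := congr1 (fun f : vec d => f i) e; rewrite !ffunE => /eqP.
  by rewrite -{1}(addn0 (x i)) eqn_add2l => /eqP <-.
have [s' [Ss' hP]] := IH _ yH lt.
by exists (vadd s s'); split; [exact: hS.1.2 | rewrite -vaddA].
Qed.

Definition boxT := {dffun forall i : 'I_d, 'I_(F i).+1}.
Definition emb (t : boxT) : vec d := [ffun i => nat_of_ord (t i)].
Definition box : {fset vec d} := [fset emb t | t : boxT].

Lemma in_box x : (x \in box) = vle x F.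
Proof.
apply/imfsetP/forallP => [[t _ ->] i|h].
  by rewrite ffunE -ltnS ltn_ord.
exists (@finfun _ (fun i => 'I_(F i).+1) (fun i => inord (x i))) => //.
by apply/ffunP => i; rewrite !ffunE inordK // ltnS; exact: h i.
Qed.

Lemma card_box : #|` box| = vnorm F.
Proof.
rewrite card_imfset; last first.
  move=> t t' e; apply/ffunP => i; apply: val_inj.
  by have := congr1 (fun f : vec d => f i) e; rewrite !ffunE.
rewrite /= -cardT card_dep_ffun /vnorm foldrE big_map big_enum /=.
by apply: eq_bigr => i _; rewrite card_ord.
Qed.

End Gns.

Local Open Scope ring_scope.

Theorem theorem4p2 (d : nat) (S : pred (vec d)) (H : {fset vec d}) (F : vec d) :
  GNS_with_gaps S H -> unique_maximal H F ->
  (genus H)%:R / ((vnorm F)%:R - (genus H)%:R) <= (type_of S H)%:R :> rat.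
Proof.
move=> hS hG.
pose vsub (f s : vec d) : vec d := [ffun i => (f i - s i)%N].
pose B := box F.
pose Sb := [fset x in B | S x]%fset.
have eS : forall x, (x \in H) = ~~ S x by move=> x; apply/idP/idP; [exact: (proj2 (hS.2 x)) | exact: (proj1 (hS.2 x))].
have HB : (H `<=` B)%fset.
  by apply/fsubsetP => x xH; rewrite /B in_box; exact: (gaps_le_F hG xH).
have eD : (B `\` H)%fset = Sb.
  by apply/fsetP => x; rewrite !inE /= eS negbK andbC.
have cardB : #|` B|%fset = (#|` H| + #|` Sb|)%N.
  rewrite -eD cardfsDS // subnKC //; exact: fsubset_leq_card.
have key : (#|` H| <= #|` PFs S H| * #|` Sb|)%N.
  pose X := [fset vsub f s | f in PFs S H, s in Sb]%fset.
  apply: (@leq_trans #|` X|).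
    apply: fsubset_leq_card; apply/fsubsetP => x xH.
    have [s [Ss hP]] := pf_decomp hS xH.
    apply/imfset2P; exists (vadd x s) => //; exists s.
      rewrite !inE /= Ss andbT /B in_box.
      apply: (@vle_trans _ _ (vadd x s)); first by apply/forallP => i; rewrite ffunE leq_addl.
      by apply: (gaps_le_F hG); move: hP; rewrite !inE => /andP[].
    by apply/ffunP => i; rewrite !ffunE addnK.
  by rewrite /X Imfset.imfset2E /= size_seq_fset (leq_trans (size_undup _)) // size_allpairs.
rewrite /genus /type_of -(card_box F) -/B cardB natrD addrC addKr.
case: (posnP #|` Sb|%fset) => [->|sbpos]; first by rewrite invr0 mulr0 ler0n.
by rewrite ler_pdivrMr ?ltr0n // -natrM ler_nat.
Qed.
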